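(* Let $d\ge 2$ be an integer and let $a_1,\ldots,a_{d-1}$ be indeterminates over $\mathbb{C}$. Let $f=x^d+a_1x^{d-1}+\cdots+a_{d-2}x^2+a_{d-1}x\in\mathbb{C}[a_1,\ldots,a_{d-1}][x]$ (monic of degree $d$ in $x$, with zero constant term). For $k\in\{1,\ldots,d-1\}$ let $$H_k(f)=\binom{d}{k}x^{d-k}+\binom{d-1}{k}a_1x^{d-k-1}+\cdots+\binom{k}{k}a_{d-k}$$ be the $k$-th Hasse derivative of $f$ (with $a_d=0$), and let $R_k=\operatorname{Res}_x(f,H_k(f))\in\mathbb{C}[a_1,\ldots,a_{d-1}]$ be the resultant of $f$ and $H_k(f)$ with respect to $x$. Let $i\in\{d-3,d-2,d-1\}$ with $i\ge 1$. Then $$R_i\notin\sqrt{(R_1,\ldots,R_{i-1},R_{i+1},\ldots,R_{d-1})},$$ where the ideal is the ideal of $\mathbb{C}[a_1,\ldots,a_{d-1}]$ generated by $\{R_1,\ldots,R_{d-1}\}\setminus\{R_i\}$ and $\sqrt{\cdot}$ denotes its radical.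
   Context: The paper works over the field $K=\mathbb{C}$ (it notes that the corresponding radical-membership statements depend only on the characteristic, which is zero). The $k$-th Hasse derivative $H_k(f)$ equals $\frac{1}{k!}\frac{d^k f}{dx^k}$. *)

(* Defs.v *)
(* The base field C is modelled as R[i] = complex R where R
   is Stdlib's real numbers (a realType / rcfType via Rstruct), i.e. the
   complex numbers. *)
From HB Require Import structures.
From mathcomp Require Import all_boot all_order all_algebra.
From mathcomp Require Import complex.
From mathcomp Require Import Rstruct.
From mathcomp Require Import mpoly.

Set Implicit Arguments.
Unset Strict Implicit.
Unset Printing Implicit Defensive.

Import Order.TTheory GRing.Theory Num.Theory.
Local Open Scope ring_scope.

Definition CC : rcfType := Rdefinitions.R.
Notation Cx := (complex CC).

Definition in_ideal (R : comPzRingType) (gens : seq R) (x : R) : Prop :=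
  exists c : 'I_(size gens) -> R, x = \sum_(j < size gens) c j * gens`_j.

Definition in_radical (R : comPzRingType) (gens : seq R) (x : R) : Prop :=
  exists n : nat, in_ideal gens (x ^+ n).

(* f = x^d + a_1 x^(d-1) + ... + a_(d-1) x in C[a_1,...,a_(d-1)][x];
   the indeterminate a_(j+1) is 'X_j for j : 'I_(d-1). *)
Definition fgen (d : nat) : {poly {mpoly Cx[d.-1]}} :=
  'X^d + \sum_(j < d.-1) ('X_j)%:P * 'X^(d - j.+1).

(* R_k = Res_x(f, H_k(f)), where H_k(f) = f^`N(k) is the k-th Hasse
   derivative (formal k-th derivative divided by k!). *)
Definition Rk (d k : nat) : {mpoly Cx[d.-1]} :=
  resultant (fgen d) ((fgen d)^`N(k)).

(* Main.v *)
Require Import Defs.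
From HB Require Import structures.
From mathcomp Require Import all_boot all_order all_algebra.
From mathcomp Require Import complex.
From mathcomp Require Import Rstruct.
From mathcomp Require Import mpoly.
From mathcomp Require Import zify.
Import GRing.Theory Num.Theory.
Local Open Scope ring_scope.


Lemma map_resultant_gen (aR rR : comNzRingType) (f : {rmorphism aR -> rR}) (p q : {poly aR}) :
  size (map_poly f p) = size p -> size (map_poly f q) = size q ->
  f (resultant p q) = resultant (map_poly f p) (map_poly f q).
Proof.
move=> sp sq; rewrite /resultant /Sylvester_mx sp sq.
rewrite -det_map_mx /= map_col_mx; congr (\det (col_mx _ _));
  by apply: map_lin1_mx => v; rewrite map_poly_rV rmorphM /= map_rVpoly.
Qed.

Lemma size_map_le (aR rR : nzSemiRingType) (f : {rmorphism aR -> rR}) (p : {poly aR}) :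
  (size (map_poly f p) <= size p)%N.
Proof.
apply/leq_sizeP => j hj; rewrite coef_map.
by move/leq_sizeP: (leqnn (size p)) => ->//; rewrite raddf0.
Qed.

Lemma coef_fgen d n : (fgen d)`_n =
  (n == d)%:R + \sum_(j < d.-1) 'X_j * (n == d - j.+1)%N%:R.
Proof.
rewrite /fgen coefD coefXn coef_sum; congr (_ + _).
by apply: eq_bigr => j _; rewrite coefCM coefXn.
Qed.


Definition vpt (d i : nat) : 'I_d.-1 -> Cx := fun j => ((d - j.+1)%N == i)%:R.

Lemma fv_eq d i : (1 <= i)%N -> (i < d)%N ->
  map_poly (meval (vpt d i)) (fgen d) = 'X^d + 'X^i.
Proof.
move=> i1 id; apply/polyP => n.
rewrite coef_map coef_fgen raddfD raddf_sum coefD !coefXn; congr (_ + _); first by rewrite raddfMn /= -mpolyC1 mevalC.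
have hj0 : ((d - i).-1 < d.-1)%N by lia.
rewrite (bigD1 (Ordinal hj0)) //= big1 ?addr0.
  rewrite mevalM mevalXU mevalMn mevalC /vpt /=.
  have -> : (d - (d - i).-1.+1 = i)%N by lia.
  by rewrite eqxx mul1r.
move=> j hj; rewrite mevalM mevalXU mevalMn mevalC /vpt.
have -> : ((d - j.+1)%N == i) = false.
  apply/negbTE; apply/eqP => h; move/eqP: hj; apply; apply: val_inj => /=; lia.
by rewrite mul0r.
Qed.


Lemma size_eq_coef (R : nzSemiRingType) (p : {poly R}) n :
  p`_n != 0 -> (forall j, (n < j)%N -> p`_j = 0) -> size p = n.+1.
Proof.
move=> nz hz; apply/eqP; rewrite eqn_leq; apply/andP; split.
  by apply/leq_sizeP => j hj; apply: hz.
by rewrite ltnNge; apply/negP => /leq_sizeP h; move/eqP: nz; apply; apply: h.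
Qed.

Lemma size_fgen_le d : (size (fgen d) <= d.+1)%N.
Proof.
apply/leq_sizeP => j hj; rewrite coef_fgen.
have -> : (j == d) = false by apply/negbTE; apply/eqP; lia.
rewrite add0r big1 // => k _.
have -> : (j == d - k.+1)%N = false by apply/negbTE; apply/eqP; lia.
by rewrite mulr0.
Qed.

Lemma size_H_le d k : (size ((fgen d)^`N(k)) <= (d - k).+1)%N.
Proof.
apply/leq_sizeP => j hj; rewrite coef_nderivn.
by move/leq_sizeP: (size_fgen_le d) => ->; [rewrite mul0rn | lia].
Qed.

Lemma bin_gt1 n m : (0 < m)%N -> (m < n)%N -> (1 < 'C(n, m))%N.
Proof.
case: n => [|n]; first by [].
case: m => [|m]; first by [].
move=> _ h; rewrite binS.
have : (0 < 'C(n, m))%N by rewrite bin_gt0; lia.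
have : (0 < 'C(n, m.+1))%N by rewrite bin_gt0; lia.
lia.
Qed.

Section Main.
Variables d i : nat.
Hypothesis i1 : (1 <= i)%N.
Hypothesis id : (i < d)%N.
Let v := vpt d i.
Let fv : {poly Cx} := 'X^d + 'X^i.

Lemma fv_size : size fv = d.+1.
Proof.
apply: size_eq_coef.
  rewrite coefD !coefXn eqxx (_ : (d == i) = false); last by apply/negbTE; apply/eqP; lia.
  rewrite /= mulr1n mulr0n addr0; exact: oner_neq0.
move=> j hj; rewrite coefD !coefXn.
rewrite (_ : (j == d) = false); last by apply/negbTE; apply/eqP; lia.
rewrite (_ : (j == i) = false); last by apply/negbTE; apply/eqP; lia.
rewrite /= mulr0n; exact: addr0.
Qed.
Lemma Hv_eq k : map_poly (meval v) ((fgen d)^`N(k)) = fv^`N(k).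
Proof. rewrite -nderivn_map fv_eq //. Qed.

Lemma Hv_coef k j : (fv^`N(k))`_j = (((k + j == d) + (k + j == i))%N%:R : Cx) *+ 'C(k + j, k).
Proof. rewrite coef_nderivn coefD !coefXn natrD. reflexivity. Qed.

Lemma Hv_size k : (k < d)%N -> size (fv^`N(k)) = (d - k).+1.
Proof.
move=> kd; apply: size_eq_coef.
  rewrite Hv_coef (_ : (k + (d - k) = d)%N); last lia.
  rewrite eqxx (_ : (d == i) = false); last by apply/negbTE; apply/eqP; lia.
  rewrite addn0 mulr1n pnatr_eq0 -lt0n bin_gt0; apply/leP; lia.
move=> j hj; rewrite Hv_coef.
rewrite (_ : (k + j == d) = false); last by apply/negbTE; apply/eqP; lia.
rewrite (_ : (k + j == i) = false); last by apply/negbTE; apply/eqP; lia.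
exact: mul0rn.
Qed.

Lemma Rk_eval k : (k < d)%N -> (Rk d k).@[v] = resultant fv (fv^`N(k)).
Proof.
move=> kd; rewrite /Rk.
rewrite (@map_resultant_gen _ _ (meval v)) -/fv.
- rewrite fv_eq // Hv_eq. reflexivity.
- apply/eqP; rewrite eqn_leq size_map_le fv_eq // fv_size size_fgen_le //.
- apply/eqP; rewrite eqn_leq size_map_le Hv_eq Hv_size // size_H_le //.
Qed.
Lemma Rk_zero k : (1 <= k)%N -> (k < d)%N -> k != i -> (Rk d k).@[v] = 0.
Proof.
move=> k1 kd ki; rewrite Rk_eval //.
have s1 : (1 < size fv)%N by rewrite fv_size; lia.
have s2 : (1 < size (fv^`N(k)))%N by rewrite Hv_size; lia.
have [[u w] /= _ e] := resultant_in_ideal s1 s2.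
have := congr1 (fun p => p.[0]) e; rewrite /= hornerC => ->.
rewrite hornerD !hornerM !horner_coef0 Hv_coef coefD !coefXn.
rewrite (_ : (0 == d)%N = false); last by apply/negbTE; apply/eqP; lia.
rewrite (_ : (0 == i)%N = false); last by apply/negbTE; apply/eqP; lia.
rewrite (_ : (k + 0 == d)%N = false); last by apply/negbTE; apply/eqP; lia.
rewrite (_ : (k + 0 == i)%N = false); last by apply/negbTE; apply/eqP; lia.
rewrite /= mulr0n mul0rn addr0 !mulr0; exact: addr0.
Qed.
Lemma Ri_nz : (Rk d i).@[v] != 0.
Proof.
rewrite Rk_eval // resultant_eq0; apply/negP => hg.
have : size (gcdp fv (fv^`N(i))) != 1%N by apply/eqP => h; rewrite h in hg.
case/closed_rootP => x hx.
have r1 := root_dvdp (dvdp_gcdl _ _) hx.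
have r2 := root_dvdp (dvdp_gcdr _ _) hx.
move: r1 r2; rewrite /root /fv nderivnD !nderivnXn subnn binn expr0 mulr1n.
have hm : forall (p : {poly Cx}) (n : nat) (y : Cx), (p *+ n).[y] = p.[y] *+ n.
  move=> p n y; elim: n => [|n IH]; first by rewrite !mulr0n horner0.
  by rewrite !mulrS hornerD IH.
rewrite !hornerE hm hornerXn.
have hd : d = (i + (d - i))%N by lia.
rewrite {1}hd exprD.
have hdi : (0 < d - i)%N by lia.
case: (eqVneq x 0) => [-> | xnz].
  move=> _; rewrite expr0n (_ : (d - i == 0)%N = false); last by apply/negbTE; apply/eqP; lia.
  rewrite /= mul0rn add0r oner_eq0; by [].
move=> /eqP h1 /eqP h2.
have ex : x ^+ (d - i) = -1.
  apply/eqP; rewrite -addr_eq0; move/eqP: h1.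
  rewrite -{2}(mulr1 (x ^+ i)) -mulrDr mulf_eq0 expf_eq0 (negbTE xnz) andbF /= addrC.
  by [].
move: h2; rewrite ex mulNrn addrC => /eqP; rewrite subr_eq0 eq_sym pnatr_eq1.
apply/negP; rewrite neq_ltn; apply/orP; right.
exact: bin_gt1.
Qed.
End Main.


Local Close Scope ring_scope.
Theorem theorem1p8 (d i : nat) :
  (2 <= d)%N ->
  (i = d - 3 \/ i = d - 2 \/ i = d - 1)%N ->
  (1 <= i)%N ->
  ~ in_radical [seq Rk d k | k <- iota 1 d.-1 & k != i] (Rk d i).
Proof.
Local Open Scope ring_scope.
move=> d2 hi i1 [n [c e]].
have id : (i < d)%N by lia.
have := congr1 (meval (vpt d i)) e.
rewrite rmorphXn [X in _ = X]raddf_sum.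
rewrite [X in _ = X]big1.
  move/eqP; rewrite expf_eq0 => /andP [_ h].
  by move: (@Ri_nz d i i1 id); rewrite (eqP h) eqxx.
move=> j _; change (meval (vpt d i) (c j * [seq Rk d k | k <- iota 1 d.-1 & k != i]`_j) = 0%R); rewrite mevalM.
set s := [seq k <- iota 1 d.-1 | k != i].
have hj : (j < size s)%N by have := ltn_ord j; rewrite {2}size_map.
rewrite (nth_map 0%N) //.
have := mem_nth 0%N hj; rewrite mem_filter mem_iota => /andP [ki /andP [k1 k2]].
move: k1 k2 ki; set k := nth _ s _ => k1 k2 ki.
have kd : (k < d)%N by lia.
rewrite (@Rk_zero d i i1 id) //.
exact: mulr0.
Qed.
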